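(* Let $(\mathscr X,d)$ be a metric space and let $(\mu_n)_{n\geqslant 1}$ be a sequence of positive Borel measures on $\mathscr X$ such that $\mu_n(\mathscr X)\leqslant M$ for all $n$, where $M$ is a positive constant. Denote by $q_n(t)=\sup_{x\in\mathscr X}\mu_n(B(x,t))$ the concentration function of $\mu_n$. Assume that there is a function $q$ such that $q_n(t)\to q(t)$ as $n\to\infty$ for a.e. $t>0$, and that $\lim_{t\to\infty}q(t)=\alpha>0$. Fix an increasing sequence $t_n\to\infty$ such that $q_n(t_n)\to\alpha$. Then there exist a subsequence $(\mu_{n_k})_{k\geqslant1}$, a sequence of points $(x_k)_{k\geqslant1}\subset\mathscr X$ and a sequence $(R_k)_{k\geqslant1}$ of positive numbers such that $R_k\leqslant t_{n_k}$, $R_k\to\infty$, $\mu_{n_k}(B(x_k,R_k))\to\alpha$ as $k\to\infty$, and the sequence of measures $\big({\mu_{n_k}}_{|B(x_k,R_k)}\big)_{k\geqslant1}$ concentrates around $(x_k)_{k\geqslant1}$.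
   Context: $B(x,r)$ denotes the open ball of center $x$ and radius $r$ in $\mathscr X$. For a Borel measure $\mu$ and a Borel set $A$, the restriction $\mu_{|A}$ is defined by $\mu_{|A}(E)=\mu(A\cap E)$. A sequence $(\nu_k)_{k\geqslant1}$ of positive Borel measures on $\mathscr X$ concentrates around a sequence of points $(x_k)_{k\geqslant1}\subset\mathscr X$ if for every $\varepsilon>0$ there exists $R_\varepsilon>0$ such that $\nu_k(\mathscr X\setminus B(x_k,R_\varepsilon))<\varepsilon$ for all $k\geqslant1$. *)

(* Defs.v *)
From HB Require Import structures.
From mathcomp Require Import all_boot all_order all_algebra.
From mathcomp Require Import all_classical all_reals all_analysis.
Set Implicit Arguments. Unset Strict Implicit. Unset Printing Implicit Defensive.
Import Order.TTheory GRing.Theory Num.Theory.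
Local Open Scope classical_set_scope.
Local Open Scope ring_scope.

Section MetricDefs.
Variables (R : realType) (T : Type) (d : T -> T -> R).

Definition pl_is_metric : Prop :=
  [/\ forall x y, 0 <= d x y,
      forall x y, d x y = 0 <-> x = y,
      forall x y, d x y = d y x &
      forall x y z, d x z <= d x y + d y z].

Definition pl_mball (x : T) (r : R) : set T := [set y | d x y < r].

Definition pl_metric_open (U : set T) : Prop :=
  forall x, U x -> exists2 r : R, 0 < r & pl_mball x r `<=` U.

Definition pl_borel_sets : set (set T) := <<s pl_metric_open >>.

Definition pl_restrict (mu : set T -> \bar R) (A : set T) : set T -> \bar R :=
  fun E => mu (A `&` E).

Definition pl_conc_fun (mu : set T -> \bar R) (t : R) : \bar R :=
  ereal_sup [set mu (pl_mball x t) | x in [set: T]].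

Definition pl_concentrates_around (nu : nat -> set T -> \bar R) (x : nat -> T) : Prop :=
  forall eps : R, 0 < eps -> exists2 Re : R, 0 < Re &
    forall k, (nu k (~` pl_mball (x k) Re) < eps%:E)%E.
End MetricDefs.

(* Main.v *)
Require Import Defs.
From HB Require Import structures.
From mathcomp Require Import all_boot all_order all_algebra.
From mathcomp Require Import all_classical all_reals all_analysis.
From mathcomp Require Import lra.
Import Order.TTheory GRing.Theory Num.Theory.
Set Implicit Arguments. Unset Strict Implicit. Unset Printing Implicit Defensive.

Definition ev (P : nat -> Prop) := exists N, forall n, (N <= n)%N -> P n.

Lemma strict_mono (f : nat -> nat) : (forall k, f k < f k.+1) ->
  forall m n, m < n -> f m < f n.
Proof.
move=> hf m; elim=> [//|n IH]; rewrite ltnS leq_eqVlt => /orP[/eqP->//|/IH].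
by move=> h; apply: ltn_trans h (hf n).
Qed.

Lemma strict_ge (f : nat -> nat) : (forall k, f k < f k.+1) -> forall k, k <= f k.
Proof. by move=> hf; elim=> // k IH; apply: leq_ltn_trans IH (hf k). Qed.

Lemma bound_fun (f : nat -> nat) K : exists B, forall a, a <= K -> f a <= B.
Proof.
elim: K => [|K [B HB]]; first by exists (f 0) => a; rewrite leqn0 => /eqP->.
exists (maxn B (f K.+1)) => a; rewrite leq_eqVlt => /orP[/eqP->|].
  by rewrite leq_maxr.
by rewrite ltnS => /HB h; rewrite (leq_trans h) // leq_maxl.
Qed.

Lemma comb K : forall (Rl : nat -> nat -> nat -> Prop),
  (forall i, ev (fun n => Rl n i i)) ->
  (forall f : nat -> nat, ev (fun n => exists a b, (a < b <= K)%N /\ Rl n (f a) (f b))) ->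
  exists (phi : nat -> nat) (g : nat -> nat),
    [/\ (forall k, (phi k < phi k.+1)%N), (forall j, (j <= g j)%N) &
    forall j, ev (fun k => Rl (phi k) (g 0) (g j))].
Proof.
elim: K => [|K IH] Rl Hrefl Hbound.
  have [N HN] := Hbound id.
  have [a [b [/andP[ab]]]] := HN N (leqnn N).
  by rewrite leqn0 => /eqP b0; rewrite b0 in ab.
pose P (S : seq nat) := forall N, exists n, N <= n /\ forall s, s \in S -> Rl n 0 s.
have [HA|HB] := pselect (forall S, P S -> forall J, exists j, J <= j /\ P (j :: S)).
  have: forall st : seq nat * nat * nat, exists res : nat * nat,
      P st.1.1 -> [/\ st.2 <= res.1, st.1.2 < res.2, P (res.1 :: st.1.1) &
                    forall s, s \in res.1 :: st.1.1 -> Rl res.2 0 s].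
    move=> [[S np] J] /=; have [PS|nPS] := pselect (P S); last by exists (0,0).
    have [j [Jj Pj]] := HA S PS J; have [n [np1 Hn]] := Pj np.+1.
    by exists (j, n) => _; split.
  move=> /choice[F HF].
  pose fix st k : seq nat * nat :=
    if k is k'.+1 then ((F (st k', k)).1 :: (st k').1, (F (st k', k)).2) else ([:: 0], 0).
  have Pst : forall k, P (st k).1.
    elim=> [|k IHk] /=.
      move=> N; have [N0 HN0] := Hrefl 0; exists (maxn N N0); split; first exact: leq_maxl.
      by move=> s; rewrite inE => /eqP->; apply: HN0; rewrite leq_maxr.
    by have [] := HF (st k, k.+1) IHk.
  have Hst : forall k, [/\ k.+1 <= head 0 (st k.+1).1, (st k).2 < (st k.+1).2 &
                forall s, s \in (st k.+1).1 -> Rl (st k.+1).2 0 s].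
    by move=> k; have [] := HF (st k, k.+1) (Pst k).
  have Hmem : forall j m, j <= m -> head 0 (st j).1 \in (st m).1.
    move=> j m; elim: m => [|m IHm]; first by rewrite leqn0 => /eqP->; rewrite inE.
    rewrite leq_eqVlt => /orP[/eqP->|]; first by rewrite /= inE eqxx.
    by rewrite ltnS => /IHm h /=; rewrite inE h orbT.
  exists (fun k => (st k.+1).2), (fun k => head 0 (st k).1); split.
  - by move=> k; have [] := Hst k.+1.
  - by case=> // j; have [] := Hst j.
  - move=> j; exists j => k jk.
    have [_ _ H] := Hst k; apply: (H (head 0 (st j).1)).
    by apply: Hmem; apply: leq_trans jk _.
have [S [PS [J HJ]]] : exists S, P S /\ exists J, forall j, J <= j -> ~ P (j :: S).
  apply: contrapT => H; apply: HB => S PS J; apply: contrapT => H2; apply: H.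
  exists S; split => //; exists J => j Jj Pj; apply: H2; by exists j.
have: forall j, exists N, J <= j -> forall n, N <= n -> ~ (forall s, s \in j :: S -> Rl n 0 s).
  move=> j; have [Jj|] := pselect (J <= j); last by exists 0.
  have := HJ j Jj; move=> /existsNP[N HN]; exists N => _ n Nn Hs; apply: HN.
  by exists n.
move=> /choice[Nf HNf].
have: forall N, exists n, N <= n /\ forall s, s \in S -> Rl n 0 s by [].
move=> /choice[h Hh].
pose fix psi k := if k is k'.+1 then h (maxn (psi k').+1 (Nf (J + k))) else h (Nf J).
have psiS : forall k, psi k < psi k.+1.
  move=> k /=; have [+ _] := Hh (maxn (psi k).+1 (Nf (J + k.+1))).
  by apply: leq_trans; rewrite leq_maxl.
have psiN : forall i k, i <= k -> Nf (J + i) <= psi k.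
  move=> i; elim=> [|k IHk]; first by rewrite leqn0 => /eqP->; rewrite addn0 /=; case: (Hh (Nf J)).
  rewrite leq_eqVlt => /orP[/eqP->|].
    by rewrite /=; have [+ _] := Hh (maxn (psi k).+1 (Nf (J + k.+1))); apply: leq_trans; rewrite leq_maxr.
  by rewrite ltnS => /IHk h1; apply: leq_trans h1 (ltnW (psiS k)).
have psiP : forall k s, s \in S -> Rl (psi k) 0 s.
  by case=> [|k] s hs /=; [case: (Hh (Nf J)) => _; apply | case: (Hh (maxn (psi k).+1 (Nf (J + k.+1)))) => _; apply].
have psige := @strict_ge psi psiS.
have H1 : forall i, ev (fun n => Rl (psi n) (J + i) (J + i)).
  move=> i; have [N HN] := Hrefl (J + i); exists N => k Nk; apply: HN.
  exact: leq_trans Nk (psige k).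
have H2 : forall f : nat -> nat, ev (fun n => exists a b, (a < b <= K)%N /\ Rl (psi n) (J + f a) (J + f b)).
  move=> f; have [B HBd] := bound_fun f K.
  have [N HN] := Hbound (fun a => if a is a'.+1 then J + f a' else 0).
  exists (maxn N B) => k Nk.
  have [a [b [/andP[ab bK] Hab]]] := HN (psi k) (leq_trans (leq_trans (leq_maxl _ _) Nk) (psige k)).
  case: a ab Hab => [|a] ab Hab.
    case: b ab bK Hab => [//|b] _ bK Hab.
    exfalso; apply: (HNf (J + f b) _ (psi k)).
    + exact: leq_addr.
    + apply: psiN; apply: leq_trans (HBd b bK) _; apply: leq_trans Nk; exact: leq_maxr.
    + move=> s; rewrite inE => /orP[/eqP->//|]; exact: psiP.
  case: b ab bK Hab => [//|b] ab bK Hab.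
  by exists a, b; split => //; rewrite -ltnS ab.
have [phi' [g' [phi'S g'ge Hev]]] := IH (fun k i j => Rl (psi k) (J + i) (J + j)) H1 H2.
exists (fun k => psi (phi' k)), (fun j => J + g' j); split.
- by move=> k; apply: strict_mono.
- by move=> j; apply: leq_trans (g'ge j) (leq_addl _ _).
- by move=> j; exact: Hev j.
Qed.

Local Open Scope classical_set_scope.
Local Open Scope ring_scope.


Lemma near_ev (P : nat -> Prop) : (\forall n \near \oo, P n) -> ev P.
Proof. by move=> [N _ HN]; exists N => n Nn; apply: HN. Qed.

Lemma ev_near (P : nat -> Prop) : ev P -> \forall n \near \oo, P n.
Proof. by move=> [N HN]; exists N => // n; apply: HN. Qed.

Lemma ev_and (P Q : nat -> Prop) : ev P -> ev Q -> ev (fun n => P n /\ Q n).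
Proof.
move=> [N HN] [N' HN']; exists (maxn N N') => n; rewrite geq_max => /andP[a b].
by split; [apply: HN|apply: HN'].
Qed.

Lemma ev_sub (P : nat -> Prop) (phi : nat -> nat) :
  (forall k, (k <= phi k)%N) -> ev P -> ev (fun k => P (phi k)).
Proof. by move=> hphi [N HN]; exists N => k Nk; apply: HN; apply: leq_trans Nk (hphi k). Qed.

Lemma ev_impl (P Q : nat -> Prop) : (forall n, P n -> Q n) -> ev P -> ev Q.
Proof. by move=> PQ [N HN]; exists N => n /HN/PQ. Qed.

Section Ebounds.
Variable R : realType.

Lemma cvge_gt_ev (u : nat -> \bar R) (l b : R) :
  u n @[n --> \oo] --> l%:E -> b < l -> ev (fun n => (b%:E < u n)%E).
Proof.
move=> hu bl; apply: near_ev; exact: (hu [set y | (b%:E < y)%E] (open_ereal_gt' (y := b%:E) _)).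
Qed.

Lemma cvge_lt_ev (u : nat -> \bar R) (l b : R) :
  u n @[n --> \oo] --> l%:E -> l < b -> ev (fun n => (u n < b%:E)%E).
Proof.
move=> hu bl; apply: near_ev; exact: (hu [set y | (y < b%:E)%E] (open_ereal_lt' (y := b%:E) _)).
Qed.

Lemma ev_cvge (u : nat -> \bar R) (l : R) :
  (forall eps, 0 < eps -> ev (fun n => ((l - eps)%:E < u n)%E /\ (u n < (l + eps)%:E)%E)) ->
  u n @[n --> \oo] --> l%:E.
Proof.
move=> H; apply/fine_cvgP; split.
  apply: ev_near; apply: ev_impl (H 1 ltr01) => n [a b].
  by rewrite fin_numE; apply/andP; split; [apply: contraTneq a => ->|apply: contraTneq b => ->]; rewrite ?ltNye ?ltye.
apply/cvgrPdist_lt => eps eps0; apply: ev_near; apply: ev_impl (H eps eps0) => n [a b].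
have : u n \is a fin_num.
  by rewrite fin_numE; apply/andP; split; [apply: contraTneq a => ->|apply: contraTneq b => ->]; rewrite ?ltNye ?ltye.
move=> /fineK hf; rewrite -hf !lte_fin in a b; rewrite /=.
by rewrite ltr_distlC a b.
Qed.

Lemma ebound (a b c : \bar R) (u v : R) :
  (0 <= a)%E -> (0 <= b)%E -> (a + b <= c)%E -> (u%:E < a)%E -> (c < v%:E)%E ->
  (b < (v - u)%:E)%E.
Proof.
case: a => [a| |] //; case: b => [b| |] //; case: c => [c| |] //=.
rewrite !lee_fin !lte_fin => a0 b0 abc ua cv; lra.
Qed.
End Ebounds.

Section Metric.
Variables (R : realType) (dsp : measure_display) (T : measurableType dsp) (d : T -> T -> R).
Hypothesis hd : pl_is_metric d.
Hypothesis hborel : @measurable dsp T = pl_borel_sets d.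

Lemma dge0 x y : 0 <= d x y. Proof. by case: hd. Qed.
Lemma dsym x y : d x y = d y x. Proof. by case: hd. Qed.
Lemma dtri x y z : d x z <= d x y + d y z. Proof. by case: hd. Qed.
Lemma d0 x : d x x = 0. Proof. by case: hd => _ h _ _; apply/h. Qed.

Lemma ball_sub x r r' : r <= r' -> pl_mball d x r `<=` pl_mball d x r'.
Proof. by move=> rr y; rewrite /pl_mball /= => h; apply: lt_le_trans h rr. Qed.

Lemma ball_center x r : 0 < r -> pl_mball d x r x.
Proof. by rewrite /pl_mball /= d0. Qed.

Lemma ball_open x r : pl_metric_open d (pl_mball d x r).
Proof.
move=> y; rewrite /pl_mball /= => hy; exists (r - d x y); first by rewrite subr_gt0.
move=> z; rewrite /pl_mball /= => hz; have := dtri x y z; lra.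
Qed.

Lemma ball_meas x r : measurable (pl_mball d x r).
Proof. rewrite hborel; apply: sub_sigma_algebra; exact: ball_open. Qed.

Lemma conc_ub (mu : {measure set T -> \bar R}) x t :
  (mu (pl_mball d x t) <= pl_conc_fun d mu t)%E.
Proof. by apply: ereal_sup_ubound; exists x. Qed.

Lemma conc_gt (mu : {measure set T -> \bar R}) t a :
  (a%:E < pl_conc_fun d mu t)%E -> exists x, (a%:E < mu (pl_mball d x t))%E.
Proof. by move=> /ereal_sup_gt [y [x _ <-] h]; exists x. Qed.
End Metric.

Lemma scaleL (R : realType) (dsp : measure_display) (T : measurableType dsp)
  (d : T -> T -> R) (mu : nat -> {measure set T -> \bar R}) (q : R -> R)
  (hq : {ae (@lebesgue_measure R), forall t : R,
          0 < t -> pl_conc_fun d (mu n) t @[n --> \oo] --> (q t)%:E})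
  (alpha : R) (hqlim : q t @[t --> +oo%R] --> (alpha : R^o)) (e : R) :
  0 < e -> exists2 s, 0 < s & ev (fun n => ((alpha - e)%:E < pl_conc_fun d (mu n) s)%E).
Proof.
move=> e0.
have /cvgrPdist_lt /(_ (e / 2)) := hqlim.
have e20 : 0 < e / 2 by lra.
move=> /(_ e20) [A [Areal HA]].
case: hq => N0 [mN0 N00 sub].
pose a := Num.max A 0.
have [s [sa hs]] : exists s, a < s < a + 1 /\ 
    (0 < s -> pl_conc_fun d (mu n) s @[n --> \oo] --> (q s)%:E).
  apply: contrapT => H.
  have : ([set` `]a, (a + 1)[] : set R) `<=` N0.
    move=> t /= ht; apply: sub => /= Pt; apply: H; exists t; split => //.
  move=> /(@le_measure _ _ _ lebesgue_measure).
  rewrite !inE => /(_ (measurable_itv _) mN0) h.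
  have : (lebesgue_measure (`]a, (a+1)%R[%classic : set R) <= 0)%E.
    apply: (le_trans h); rewrite le_eqVlt; apply/orP; left; apply/eqP; exact: N00.
  rewrite lebesgue_measure_itv /= lte_fin ltrDl ltr01 -EFinD lee_fin; lra.
have s0 : 0 < s.
  move: sa => /andP[sa _]; apply: le_lt_trans sa; by rewrite le_max lexx orbT.
exists s => //.
apply: cvge_gt_ev (hs s0) _.
have : A < s.
  move: sa => /andP[sa _]; apply: le_lt_trans sa; by rewrite le_max lexx.
move=> /HA; rewrite ltr_distlC; lra.
Qed.

Lemma kbound (R : realType) (dsp : measure_display) (T : measurableType dsp)
  (mu : {measure set T -> \bar R}) (M : R) (hmass : (mu [set: T] <= M%:E)%E)
  (F : nat -> set T) (K : nat) (c : R) (hF : forall a, measurable (F a))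
  (hc : forall a, (a <= K)%N -> (c%:E <= mu (F a))%E)
  (hdisj : forall a b, (a < b <= K)%N -> F a `&` F b = set0) :
  c *+ K.+1 <= M.
Proof.
have tF : trivIset `I_K.+1 F.
  move=> i j /= iK jK; case: (ltngtP i j) => [ij|ji|//].
    have -> : F i `&` F j = set0 by apply: hdisj; rewrite ij /= -ltnS.
    by case=> x [].
  have -> : F i `&` F j = set0 by rewrite setIC; apply: hdisj; rewrite ji /= -ltnS.
  by case=> x [].
have := measure_semi_additive_ord_I mu (fun k _ => hF k) tF (bigsetU_measurable _ _).
move=> /(_ (fun i _ => hF i)) hsum.
have h1 : ((c *+ K.+1)%:E <= \sum_(i < K.+1) mu (F i))%E.
  have <- : \sum_(i < K.+1) (c%:E) = (c *+ K.+1)%:E.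
    by rewrite sumEFin sumr_const card_ord.
  apply: lee_sum => i _.
  by apply: hc; rewrite -ltnS.
rewrite -lee_fin; apply: le_trans h1 _; rewrite -hsum; apply: le_trans hmass.
by apply: le_measure; rewrite ?inE //; apply: bigsetU_measurable => i _.
Qed.

Lemma bound_funR (R : realType) (f : nat -> R) K : exists B, forall a, (a <= K)%N -> f a <= B.
Proof.
elim: K => [|K [B HB]]; first by exists (f 0) => a; rewrite leqn0 => /eqP->.
exists (Num.max B (f K.+1)) => a; rewrite leq_eqVlt => /orP[/eqP->|].
  by rewrite le_max lexx orbT.
by rewrite ltnS => /HB h; rewrite le_max h.
Qed.

Theorem lemma1p3 (R : realType) (dsp : measure_display) (T : measurableType dsp)
  (d : T -> T -> R)
  (hd : pl_is_metric d)
  (hborel : @measurable dsp T = pl_borel_sets d)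
  (mu : nat -> {measure set T -> \bar R}) (M : R) (hM : 0 < M)
  (hmass : forall n, (mu n [set: T] <= M%:E)%E)
  (q : R -> R)
  (hq : {ae (@lebesgue_measure R), forall t : R,
          0 < t -> pl_conc_fun d (mu n) t @[n --> \oo] --> (q t)%:E})
  (alpha : R) (halpha : 0 < alpha)
  (hqlim : q t @[t --> +oo%R] --> (alpha : R^o))
  (tt : nat -> R) (htt_incr : {homo tt : n m / (n <= m)%N >-> n <= m})
  (htt_inf : tt n @[n --> \oo] --> +oo%R)
  (htt_conc : pl_conc_fun d (mu n) (tt n) @[n --> \oo] --> alpha%:E) :
  exists (phi : nat -> nat) (x : nat -> T) (Rk : nat -> R),
    [/\ {homo phi : n m / (n < m)%N >-> (n < m)%N},
        forall k, 0 < Rk k /\ Rk k <= tt (phi k),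
        Rk k @[k --> \oo] --> +oo%R,
        mu (phi k) (pl_mball d (x k) (Rk k)) @[k --> \oo] --> alpha%:E &
        pl_concentrates_around d
          (fun k => pl_restrict (mu (phi k)) (pl_mball d (x k) (Rk k))) x].
Proof.
pose e (b : nat) := alpha / 4 / b.+1%:R.
have a40 : 0 < alpha / 4 by lra.
have e0 : forall b, 0 < e b.
  by move=> b; rewrite /e divr_gt0 // ltr0n.
have eA : forall b, e b <= alpha / 4.
  move=> b; rewrite /e ler_pdivrMr ?ltr0n //; have : (1 <= b.+1%:R :> R) by rewrite ler1n.
  move=> h1; nra.
have emono : forall b b', (b <= b')%N -> e b' <= e b.
  move=> b b' bb; rewrite /e ler_pM2l // lef_pV2 ?posrE ?ltr0n // ler_nat.
  by rewrite ltnS.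
have esmall : forall eps, 0 < eps -> exists j, e j <= eps.
  move=> eps eps0; exists (Num.truncn (alpha / (4 * eps))).
  have := truncnS_gt (alpha / (4 * eps)); set n := (Num.truncn _).+1%:R.
  have n0 : 0 < n by rewrite ltr0n.
  rewrite ltr_pdivrMr ?mulr_gt0 // => h; rewrite /e ler_pdivrMr //.
  rewrite -/n; lra.
have : forall b, exists p : R * nat, 0 < p.1 /\
    forall n, (p.2 <= n)%N -> ((alpha - e b)%:E < pl_conc_fun d (mu n) p.1)%E.
  move=> b; have [s0 s00 [N HN]] := scaleL hq hqlim (e0 b).
  by exists (s0, N).
move=> /choice[sN HsN].
pose s b := (sN b).1; pose Nq b := (sN b).2.
have s0 : forall b, 0 < s b by move=> b; case: (HsN b).
have Hq : forall b n, (Nq b <= n)%N -> ((alpha - e b)%:E < pl_conc_fun d (mu n) (s b))%E.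
  by move=> b; case: (HsN b).
have [x0 _] := conc_gt (Hq 0%N _ (leqnn _)).
have : forall p : nat * nat, exists y, (Nq p.2 <= p.1)%N ->
    ((alpha - e p.2)%:E < mu p.1 (pl_mball d y (s p.2)))%E.
  move=> [n b] /=; have [h|h] := pselect (Nq b <= n)%N; last by exists x0.
  by have [y hy] := conc_gt (Hq b n h); exists y.
move=> /choice[Yf HY].
pose Y n b := Yf (n, b).
have HYb : forall n b, (Nq b <= n)%N -> ((alpha - e b)%:E < mu n (pl_mball d (Y n b) (s b)))%E.
  by move=> n b h; exact: (HY (n, b) h).
have [Ns HNs] := near_ev (cvgry_gt htt_inf 0).
pose K := Num.truncn (M / (alpha / 2)).
have hK : M < (alpha / 2) *+ K.+1.
  have h := truncnS_gt (M / (alpha / 2)); have a2 : 0 < alpha / 2 by lra.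
  rewrite -/K ltr_pdivrMr // in h.
  by rewrite -mulr_natr mulrC.
pose Rl n i j := exists z, pl_mball d (Y (n + Ns)%N i) (s i) z /\ pl_mball d (Y (n + Ns)%N j) (s j) z.
have Hrefl : forall i, ev (fun n => Rl n i i).
  by move=> i; exists 0%N => n _; exists (Y (n + Ns)%N i); split; apply: ball_center.
have Hbound : forall f : nat -> nat, ev (fun n => exists a b, (a < b <= K)%N /\ Rl n (f a) (f b)).
  move=> f; have [B HB] := bound_fun (fun a => Nq (f a)) K.
  exists B => n Bn; apply: contrapT => H.
  have := @kbound R dsp T (mu (n + Ns)%N) M (hmass _)
    (fun a => pl_mball d (Y (n + Ns)%N (f a)) (s (f a))) K (alpha / 2).
  move=> /(_ (fun a => ball_meas hd hborel _ _)).
  have hc : forall a, (a <= K)%N ->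
      ((alpha / 2)%:E <= mu (n + Ns)%N (pl_mball d (Y (n + Ns)%N (f a)) (s (f a))))%E.
    move=> a aK; apply/ltW; apply: le_lt_trans (HYb _ _ _).
      by rewrite lee_fin; have := eA (f a); lra.
    by apply: leq_trans (HB a aK) _; apply: leq_trans Bn (leq_addr _ _).
  move=> /(_ hc) h.
  suff hdisj : forall a b, (a < b <= K)%N -> pl_mball d (Y (n + Ns)%N (f a)) (s (f a))
      `&` pl_mball d (Y (n + Ns)%N (f b)) (s (f b)) = set0.
    by have := lt_le_trans hK (h hdisj); rewrite ltxx.
  move=> a b ab; rewrite -subset0 => z [za zb]; apply: H.
  by exists a, b; split => //; exists z.
have [phi0 [g [phi0S gge Hev]]] := comb Hrefl Hbound.
pose phi k := (phi0 k + Ns)%N.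
have phige : forall k, (k <= phi k)%N.
  by move=> k; apply: leq_trans (@strict_ge phi0 phi0S k) (leq_addr _ _).
pose x k := Y (phi k) (g 0%N).
pose rho j := s (g 0%N) + 2 * s (g j).
have Hincl : forall j, ev (fun k => forall w, pl_mball d (Y (phi k) (g j)) (s (g j)) w ->
    pl_mball d (x k) (rho j) w).
  move=> j; apply: ev_impl (Hev j) => k [z [zx zy]] w; rewrite /pl_mball /= in zx zy *.
  move=> hw; have h1 := dtri hd (x k) z w; have h2 := dtri hd z (Y (phi k) (g j)) w.
  rewrite (dsym hd z (Y (phi k) (g j))) in h2; rewrite /rho /x /phi in h1 h2 hw *; lra.
have Hmass : forall j, ev (fun k =>
    ((alpha - e (g j))%:E < mu (phi k) (pl_mball d (Y (phi k) (g j)) (s (g j))))%E).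
  move=> j; exists (Nq (g j)) => k hk; apply: HYb; exact: leq_trans hk (phige k).
have Htt : forall A, ev (fun k => A <= tt (phi k)).
  by move=> A; apply: (@ev_sub (fun n => A <= tt n) phi phige); apply: near_ev; exact: cvgry_ge htt_inf A.
have Hc : forall eps, 0 < eps -> ev (fun k => (pl_conc_fun d (mu (phi k)) (tt (phi k)) < (alpha + eps)%:E)%E).
  move=> eps eps0; apply: (@ev_sub (fun n => (pl_conc_fun d (mu n) (tt n) < (alpha + eps)%:E)%E) phi phige).
  apply: cvge_lt_ev htt_conc _; lra.
have ttpos : forall k, 0 < tt (phi k).
  by move=> k; apply: HNs; rewrite /phi leq_addl.
exists phi, x, (fun k => tt (phi k)); split.
- by move=> m n mn; rewrite /phi ltn_add2r; apply: strict_mono.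
- by move=> k; split.
- by apply/cvgryPge => A; apply: ev_near; apply: Htt.
- apply: ev_cvge => eps eps0; have [j hj] := esmall eps eps0.
  have egj : e (g j) <= eps := le_trans (emono _ _ (gge j)) hj.
  apply: ev_impl (ev_and (Hincl j) (ev_and (Hmass j) (ev_and (Htt (rho j)) (Hc eps eps0)))).
  move=> k [hi [hm [ht hc]]]; split.
    have h1 : ((alpha - eps)%:E <= (alpha - e (g j))%:E)%E by rewrite lee_fin; lra.
    apply: (le_lt_trans h1); apply: (lt_le_trans hm).
    apply: le_measure; [rewrite inE; apply: (ball_meas hd hborel)|rewrite inE; apply: (ball_meas hd hborel)|].
    by move=> w hw; apply: (ball_sub ht); apply: hi.
  exact: le_lt_trans (conc_ub _ _ _ _) hc.
- move=> eps eps0; have eps2 : 0 < eps / 2 by lra.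
  have [j hj] := esmall (eps / 2) eps2.
  have egj : e (g j) <= eps / 2 := le_trans (emono _ _ (gge j)) hj.
  have [K0 HK0] := ev_and (Hincl j) (ev_and (Hmass j) (ev_and (Htt (rho j)) (Hc (eps / 2) eps2))).
  have [B HB] := bound_funR (fun k => tt (phi k)) K0.
  pose Re := Num.max (Num.max (rho j) B) 1.
  have rhoRe : rho j <= Re by rewrite /Re !le_max lexx.
  have BRe : B <= Re by rewrite /Re !le_max lexx orbT.
  exists Re; first by rewrite /Re lt_max ltr01 orbT.
  move=> k; rewrite /pl_restrict.
  have mball := ball_meas hd hborel.
  have mO : measurable (pl_mball d (x k) (tt (phi k)) `&` ~` pl_mball d (x k) Re).
    by apply: measurableI; [apply: mball | apply: measurableC; apply: mball].
  case: (leqP K0 k) => hk.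
    have [hi [hm [ht hc]]] := HK0 k hk.
    have dis : pl_mball d (Y (phi k) (g j)) (s (g j)) `&`
        (pl_mball d (x k) (tt (phi k)) `&` ~` pl_mball d (x k) Re) = set0.
      rewrite -subset0 => w [wy [_ wn]]; apply: wn; apply: (ball_sub rhoRe); exact: hi.
    have hU := measureU (mu (phi k)) (mball _ _) mO dis.
    have hle : (mu (phi k) (pl_mball d (Y (phi k) (g j)) (s (g j)) `|`
        (pl_mball d (x k) (tt (phi k)) `&` ~` pl_mball d (x k) Re)) <=
        mu (phi k) (pl_mball d (x k) (tt (phi k))))%E.
      apply: le_measure; [rewrite inE; apply: measurableU => //; apply: mball|rewrite inE; apply: mball|].
      move=> w [wy|[wx _]] //; apply: (ball_sub ht); exact: hi.
    rewrite hU in hle.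
    have := ebound (measure_ge0 _ _) (measure_ge0 _ _) hle hm (le_lt_trans (conc_ub _ _ _ _) hc).
    move=> h; apply: (lt_le_trans h); rewrite lee_fin; lra.
  have -> : pl_mball d (x k) (tt (phi k)) `&` ~` pl_mball d (x k) Re = set0.
    rewrite -subset0 => w [wx wn]; apply: wn; apply: (ball_sub _ wx).
    by apply: le_trans (HB k (ltnW hk)) BRe.
  by rewrite measure0 lte_fin.
Qed.
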